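(* Let $\textsc{prop}$ be a finite set of propositional variables and $w$ a propositional variable not in $\textsc{prop}$. Then (1) $\mathrm{PL}_{\{\oplus_3\}}[\textsc{prop}]\leq_{pc}\mathrm{PL}_{\{\mathsf{oxor}\}}[\textsc{prop}\cup\{w\}]$, and (2) $\mathrm{PL}_{\{\oplus_3\}}[\textsc{prop}]\leq_{pc}\mathrm{PL}_{\{\mathsf{aimp}\}}[\textsc{prop}\cup\{w\}]$.
   Context: $\oplus_3(x,y,z)=x\oplus y\oplus z$, $\mathsf{oxor}(x,y,z)=x\lor(y\oplus z)$, $\mathsf{aimp}(x,y,z)=x\land(y\to z)$. For a set $O$ of Boolean functions and finite variable set $P$, $\mathrm{PL}_O[P]$ is the set of formulas $\phi::=x\mid f(\phi_1,\dots,\phi_n)$ with $x\in P$, $f\in O$, viewed as the concept class whose concepts are these formulas, whose examples are truth assignments $V:P\to\{0,1\}$, and where $\lambda(\phi)$ is the set of satisfying assignments. For concept classes $\mathcal{C}_i=(C_i,E_i,\lambda_i)$, $\mathcal{C}_1\leq_{pc}\mathcal{C}_2$ means there are $f:C_1\to C_2$ and $h:E_1\to E_2$ such that (i) for all $c\in C_1,e\in E_1$: $e\in\lambda_1(c)$ iff $h(e)\in\lambda_2(f(c))$; and (ii) for each $e\in E_2$, either $e\in\lambda_2(f(c))$ for all $c\in C_1$, or for no $c\in C_1$, or there is $e'\in E_1$ with $\{c\mid e\in\lambda_2(f(c))\}=\{c\mid e'\in\lambda_1(c)\}$. *)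

(* Defs.v *)
From mathcomp Require Import all_boot.
Set Implicit Arguments. Unset Strict Implicit. Unset Printing Implicit Defensive.

Definition xor3 (x y z : bool) : bool := xorb x (xorb y z).
Definition oxor (x y z : bool) : bool := x || xorb y z.
Definition aimp (x y z : bool) : bool := x && (y ==> z).

Inductive form3 (V : Type) : Type :=
| FVar : V -> form3 V
| FOp  : form3 V -> form3 V -> form3 V -> form3 V.
Arguments FVar {V} _.
Arguments FOp {V} _ _ _.

Fixpoint eval3 (V : Type) (f : bool -> bool -> bool -> bool)
    (v : V -> bool) (phi : form3 V) : bool :=
  match phi with
  | FVar x => v x
  | FOp a b c => f (eval3 f v a) (eval3 f v b) (eval3 f v c)
  end.

Record concept_class := ConceptClass {
  cc_C : Type;
  cc_E : Type;
  cc_lam : cc_C -> cc_E -> Prop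
}.

Definition PL3 (f : bool -> bool -> bool -> bool) (V : Type) : concept_class :=
  @ConceptClass (form3 V) (V -> bool) (fun phi v => eval3 f v phi = true).

(** Polynomial-free "pc" reduction C1 <=_pc C2, exactly as in the paper. *)
Definition pc_reducible (K1 K2 : concept_class) : Prop :=
  exists (f : cc_C K1 -> cc_C K2) (h : cc_E K1 -> cc_E K2),
    (forall (c : cc_C K1) (e : cc_E K1), cc_lam c e <-> cc_lam (f c) (h e)) /\
    (forall e : cc_E K2,
        (forall c : cc_C K1, cc_lam (f c) e) \/
        (forall c : cc_C K1, ~ cc_lam (f c) e) \/
        (exists e' : cc_E K1, forall c : cc_C K1, cc_lam (f c) e <-> cc_lam c e')).

(* Main.v *)
Require Import Defs.
From mathcomp Require Import all_boot.

Section S.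
Variable P : Type.
Definition W : form3 (option P) := FVar None.

Fixpoint go (c : form3 P) : form3 (option P) :=
  match c with
  | FVar x => FVar (Some x)
  | FOp a b d => FOp W (go a) (FOp W (go b) (go d))
  end.

Definition IFF (x y : form3 (option P)) := FOp (FOp W x y) y x.

Fixpoint ga (c : form3 P) : form3 (option P) :=
  match c with
  | FVar x => FVar (Some x)
  | FOp a b d => IFF (ga a) (IFF (ga b) (ga d))
  end.

Lemma go_ok (e : option P -> bool) c : e None = false ->
  eval3 oxor e (go c) = eval3 xor3 (fun x => e (Some x)) c.
Proof.
move=> H; elim: c => [x|a IHa b IHb d IHd] //=.
rewrite /oxor /xor3 /= H IHa IHb IHd /=.
by case: (eval3 _ _ a); case: (eval3 _ _ b); case: (eval3 _ _ d).
Qed.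

Lemma ga_ok (e : option P -> bool) c : e None = true ->
  eval3 aimp e (ga c) = eval3 xor3 (fun x => e (Some x)) c.
Proof.
move=> H; elim: c => [x|a IHa b IHb d IHd] //=.
rewrite /aimp /xor3 /= H IHa IHb IHd /=.
by case: (eval3 _ _ a); case: (eval3 _ _ b); case: (eval3 _ _ d).
Qed.
End S.

(* PROP is the finite type P; PROP ∪ {w} with w ∉ PROP is option P, w = None. *)
Theorem propositionA7 (P : finType) :
  pc_reducible (PL3 xor3 P) (PL3 oxor (option P)) /\
  pc_reducible (PL3 xor3 P) (PL3 aimp (option P)).
Proof.
split.
- exists (fun c => FOp (@W P) (@go P c) (@W P)).
  exists (fun v o => match o with Some x => v x | None => false end).
  split.
  + move=> c v /=; rewrite /oxor /= (@go_ok P (fun o => match o with Some x => v x | None => false end)) //=.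
    by case: (eval3 _ _ c).
  + move=> e /=; case E: (e None).
    * by left.
    * right; right; exists (fun x => e (Some x)) => c.
      by rewrite /oxor go_ok //; case: (eval3 _ _ c).
- exists (fun c => FOp (@W P) (@W P) (@ga P c)).
  exists (fun v o => match o with Some x => v x | None => true end).
  split.
  + move=> c v /=; rewrite /aimp /= (@ga_ok P (fun o => match o with Some x => v x | None => true end)) //=.
  + move=> e /=; case E: (e None).
    * right; right; exists (fun x => e (Some x)) => c.
      by rewrite /aimp ga_ok.
    * by right; left.
Qed.
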